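(* Let $A\in\mathbb{C}^{m\times n}$ ($m\ge 2$), $\alpha_0,\beta_0\in(0,\tfrac{\pi}{2})$, and suppose row $i_0$ of $A$ is weakly dominated by row $i_1$ of $A$ ($i_1\ne i_0$), i.e. $\mathrm{Re}((e^{i_0})^*Ad^j)\le\mathrm{Re}((e^{i_1})^*Ad^j)$ for all $j\in\mathcal J$, with strict inequality for at least one $j_0\in\mathcal J$. Let $A'\in\mathbb{C}^{(m-1)\times n}$ be obtained from $A$ by deleting row $i_0$. Suppose $(z^0,w^0)$, with $z^0=(z^0_1,\dots,z^0_{i_0-1},z^0_{i_0+1},\dots,z^0_m)\in S^{m-1}_{\alpha_0}$ and $w^0\in S^n_{\beta_0}$, is a complex Nash equilibrium of $G_{\mathcal C}(A')$, and suppose the condition of elimination $$\mathrm{Im}((e^{i_0})^*Aw^0)=\mathrm{Im}((e^{i_1})^*Aw^0)$$ holds. Then, with $z'^0=(z^0_1,\dots,z^0_{i_0-1},0,z^0_{i_0+1},\dots,z^0_m)\in S^m_{\alpha_0}$, the pair $(z'^0,w^0)$ is a complex Nash equilibrium of $G_{\mathcal C}(A)$ and $v_{A'}=v_A$.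
   Context: For $\gamma\in(0,\tfrac{\pi}{2})$ and $p\ge 1$ let $S^p_\gamma=\{z\in\mathbb{C}^p:\ \text{for each }k,\ z_k=0\text{ or }|\arg z_k|\le\gamma,\ \sum_{k=1}^p z_k=1\}$ ($\arg$ the principal argument in $(-\pi,\pi]$). Its extreme points are $d^1,\dots,d^{p^2}$, where $d^k=e^k$ (standard basis vector) for $k\le p$, and $d^{p+1},\dots,d^{p^2}$ are the $p(p-1)$ vectors having exactly two nonzero coordinates, one equal to $\tfrac12+bi$ and another equal to $\tfrac12-bi$, with $b=\tfrac12\tan\gamma$. The two-player zero-sum complex game $G_{\mathcal C}(A)$, for $A\in\mathbb{C}^{m\times n}$ and strategy arguments $\alpha_0,\beta_0$: player I chooses $z\in S^m_{\alpha_0}$, player II chooses $w\in S^n_{\beta_0}$, player I receives $\mathrm{Re}(z^*Aw)$ and player II receives $-\mathrm{Re}(z^*Aw)$ ($z^*$ the conjugate transpose); $G_{\mathcal C}(A')$ is defined the same way with $S^{m-1}_{\alpha_0}$ for player I. Here $d^j$, $j\in\mathcal J=\{1,\dots,n^2\}$, are the extreme points of $S^n_{\beta_0}$ and $e^i$ the standard basis vectors of $\mathbb{C}^m$. A pair $(z^0,w^0)$ is a complex Nash equilibrium if $\mathrm{Re}(z^*Aw^0)\le\mathrm{Re}((z^0)^*Aw^0)\le\mathrm{Re}((z^0)^*Aw)$ for all strategies $z$ of player I and $w$ of player II; the value of the game is $v_A=\mathrm{Re}((z^0)^*Aw^0)$ for a Nash equilibrium $(z^0,w^0)$. *)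

(* Defs.v *)
From mathcomp Require Import all_boot all_order all_algebra.
From mathcomp Require Import reals trigo.
From mathcomp Require Export complex.
Set Implicit Arguments. Unset Strict Implicit. Unset Printing Implicit Defensive.
Import Order.TTheory GRing.Theory Num.Theory.
Local Open Scope ring_scope.
Local Open Scope complex_scope.

Section ComplexGame.
Variable R : realType.

Definition modc (z : R[i]) : R := Num.sqrt (complex.Re z ^+ 2 + complex.Im z ^+ 2).

Definition parg_abs_le (z : R[i]) (g : R) : Prop :=
  exists th : R, [/\ - pi < th, th <= pi, `|th| <= g &
    z = (modc z * cos th) +i* (modc z * sin th)].

Definition strat (p : nat) (g : R) (z : 'cV[R[i]]_p) : Prop :=
  (forall k : 'I_p, z k 0 = 0 \/ parg_abs_le (z k 0) g) /\
  \sum_(k < p) z k 0 = 1.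

Definition ebasis (p : nat) (k : 'I_p) : 'cV[R[i]]_p := delta_mx k 0.

(* the extreme points d^1..d^{p^2} of S^p_gamma, b = tan(gamma)/2 *)
Definition extreme_pt (p : nat) (g : R) (d : 'cV[R[i]]_p) : Prop :=
  (exists k : 'I_p, d = ebasis k) \/
  (exists k l : 'I_p, k != l /\
     d = ((1/2) +i* (tan g / 2)) *: ebasis k + ((1/2) -i* (tan g / 2)) *: ebasis l).

Definition ctr (p q : nat) (M : 'M[R[i]]_(p, q)) : 'M[R[i]]_(q, p) :=
  (map_mx Num.conj M)^T.

Definition bil (m n : nat) (A : 'M[R[i]]_(m, n)) (z : 'cV[R[i]]_m) (w : 'cV[R[i]]_n) : R[i] :=
  (ctr z *m A *m w) 0 0.

Definition payoff (m n : nat) (A : 'M[R[i]]_(m, n)) z w : R := complex.Re (bil A z w).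

Definition complex_NE (m n : nat) (a0 b0 : R) (A : 'M[R[i]]_(m, n))
    (z0 : 'cV[R[i]]_m) (w0 : 'cV[R[i]]_n) : Prop :=
  [/\ strat a0 z0, strat b0 w0,
      (forall z, strat a0 z -> payoff A z w0 <= payoff A z0 w0) &
      (forall w, strat b0 w -> payoff A z0 w0 <= payoff A z0 w)].

Definition ins0 (m : nat) (i0 : 'I_m.+1) (z : 'cV[R[i]]_m) : 'cV[R[i]]_m.+1 :=
  \col_(i < m.+1) (match unlift i0 i with Some k => z k 0 | None => 0 end).

End ComplexGame.

Arguments parg_abs_le {R}.
Arguments modc {R}.
Arguments strat {R p}.
Arguments ebasis {R p}.
Arguments extreme_pt {R p}.
Arguments ctr {R p q}.
Arguments bil {R m n}.
Arguments payoff {R m n}.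
Arguments complex_NE {R m n}.
Arguments ins0 {R m}.

(* Main.v *)
Require Import Defs.
From mathcomp Require Import all_boot all_order all_algebra.
From mathcomp Require Import reals trigo.
From mathcomp Require Import complex.
From mathcomp Require Import ring lra.
Import Order.TTheory GRing.Theory Num.Theory.
Local Open Scope ring_scope.
Local Notation cRe := complex.Re.
Local Notation cIm := complex.Im.
Section S.
Variable R : realType.
Local Open Scope complex_scope.

Definition cp (g : R) : R[i] := (1/2) +i* (tan g / 2).
Definition cm (g : R) : R[i] := (1/2) -i* (tan g / 2).
Definition mix p (g : R) (k l : 'I_p) : 'cV[R[i]]_p := cp g *: ebasis k + cm g *: ebasis l.
Arguments mix {p}.

Lemma ebasisE p (k j : 'I_p) : @ebasis R p k j 0 = if j == k then 1 else 0.
Proof. by rewrite /ebasis mxE eqxx andbT; case: eqP. Qed.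

Lemma mixE p (g : R) (k l j : 'I_p) : k != l ->
  mix g k l j 0 = if j == k then cp g else if j == l then cm g else 0.
Proof.
move=> kl; rewrite /mix !mxE !eqxx !andbT.
case: (eqVneq j k) => [->|jk]; first by rewrite (negbTE kl) mulr1 mulr0 addr0.
by case: (eqVneq j l) => _; rewrite mulr0 ?mulr1 ?mulr0 add0r.
Qed.

Lemma sum_if1 p (H : 'I_p -> R[i] -> R[i]) (k : 'I_p) x :
  (forall j, H j 0 = 0) -> \sum_j H j (if j == k then x else 0) = H k x.
Proof.
move=> H0; rewrite (bigD1 k) //= eqxx big1 ?addr0 // => j /negbTE ->; exact: H0.
Qed.

Lemma sum_if2 p (H : 'I_p -> R[i] -> R[i]) (k l : 'I_p) x y : k != l ->
  (forall j, H j 0 = 0) ->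
  \sum_j H j (if j == k then x else if j == l then y else 0) = H k x + H l y.
Proof.
move=> kl H0; have lk : l != k by rewrite eq_sym.
rewrite (bigD1 k) //= eqxx (bigD1 l) /=; last exact: lk.
rewrite eqxx (negbTE lk).
rewrite big1 ?addr0 // => j /andP[jl jk].
by rewrite (negbTE jl) (negbTE jk) H0.
Qed.

Lemma bilE m n (A : 'M[R[i]]_(m,n)) z w :
  bil A z w = \sum_i (z i 0)^* * (A *m w) i 0.
Proof. rewrite /bil -mulmxA mxE; apply: eq_bigr => i _; by rewrite !mxE. Qed.

Lemma ReJM (z u : R[i]) : cRe (z^* * u) = cRe (u^* * z).
Proof. case: z u => a b [c d] /=. rewrite !mulNr !opprK; ring. Qed.

Lemma payoff_alt m n (A : 'M[R[i]]_(m,n)) z w :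
  payoff A z w = cRe (\sum_i ((A *m w) i 0)^* * z i 0).
Proof. rewrite /payoff bilE !raddf_sum; apply: eq_bigr => i _; exact: ReJM. Qed.

Lemma payoff_e m n (A : 'M[R[i]]_(m,n)) i d :
  payoff A (ebasis i) d = cRe (\sum_k A i k * d k 0).
Proof.
rewrite /payoff bilE.
under eq_bigr do rewrite ebasisE.
rewrite (@sum_if1 _ (fun j x => x^* * (A *m d) j 0)) ?mxE; last first.
  by move=> j; rewrite conjC0 mul0r.
by rewrite conjC1 mul1r.
Qed.

Lemma modc_ge0 (z : R[i]) : 0 <= modc z. Proof. exact: sqrtr_ge0. Qed.

Lemma tan_gt0 (g : R) : 0 < g < pi/2 -> 0 < tan g.
Proof.
move=> /andP[g0 gpi]; rewrite /tan divr_gt0 //.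
  apply: sin_gt0_pihalf; by rewrite g0.
apply: cos_gt0_pihalf; rewrite gpi andbT; have := pi_gt0 R => ?; lra.
Qed.

Lemma parg_cp (g : R) : 0 < g < pi/2 -> parg_abs_le (cp g) g /\ parg_abs_le (cm g) g.
Proof.
move=> hg; have /andP[g0 gpi] := hg.
have cg : 0 < cos g by apply: cos_gt0_pihalf; rewrite gpi andbT; have := pi_gt0 R => ?; lra.
have hpi := pi_gt0 R.
set K := (2 * cos g)^-1.
have K0 : 0 < K by rewrite invr_gt0; lra.
have HK : forall s, s ^+ 2 = (tan g / 2) ^+ 2 -> modc ((1/2) +i* s) = K.
  move=> s hs; rewrite /modc /= hs.
  have -> : (1/2) ^+ 2 + (tan g / 2) ^+ 2 = K ^+ 2.
    apply/eqP; rewrite -subr_eq0 (_ : _ - _ = (cos g ^+ 2 + sin g ^+ 2 - 1) / (4 * cos g ^+ 2)).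
      by rewrite cos2Dsin2 subrr mul0r.
    rewrite /K /tan; field; exact: lt0r_neq0.
  by rewrite sqrtr_sqr gtr0_norm.
have cK : K * cos g = 1/2 by rewrite /K; field; rewrite gt_eqF.
have sK : K * sin g = tan g / 2 by rewrite /K /tan; field; rewrite gt_eqF.
split.
  exists g; split; first lra; first lra; first by rewrite gtr0_norm.
  by rewrite /cp HK // cK sK.
exists (- g); split; first lra; first lra; first by rewrite normrN gtr0_norm.
rewrite /cm HK ?sqrrN // cosN sinN mulrN cK sK; by [].
Qed.


Lemma argmax_ex (q : nat) (f : 'I_q.+1 -> R) : exists k, forall j, f j <= f k.
Proof.
case: (@arg_maxP _ _ _ ord0 xpredT f isT) => k _ Hk; exists k => j; exact: Hk.
Qed.

Lemma keyG (p : nat) (b : R) (a t r s : 'I_p -> R) : 0 < b ->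
  (forall k, a k <= 0) ->
  (forall k l, k != l -> (a k + a l) / 2 + b * (t k - t l) <= 0) ->
  (forall k, `|s k| <= 2 * b * r k) -> \sum_k s k = 0 ->
  \sum_k (r k * a k - s k * t k) <= 0.
Proof.
move=> b0 Ha H2 Hs Hsum.
destruct p as [|q].
  by rewrite big_ord0.
have [ks Hks] := @argmax_ex q (fun k => 2 * b * t k + a k).
set c := t ks + a ks / (2 * b).
have -> : \sum_k (r k * a k - s k * t k) = \sum_k (r k * a k - s k * (t k - c)).
  rewrite (eq_bigr (fun k => (r k * a k - s k * (t k - c)) + - (s k * c))); last by move=> k _; ring.
  by rewrite big_split /= sumrN -mulr_suml Hsum mul0r oppr0 addr0.
apply: (@le_trans _ _ (\sum_(k < q.+1) (0:R))); last by rewrite big1. apply: ler_sum => k _.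
have b2 : 0 < 2 * b by lra.
have hc : 2 * b * c = 2 * b * t ks + a ks.
  rewrite /c mulrDr; congr (_ + _); rewrite mulrC divfK //; lra.
have h1 : 2 * b * (t k - c) <= - a k.
  have := Hks k; rewrite mulrBr hc; lra.
have h2 : 2 * b * (c - t k) <= - a k.
  rewrite mulrBr hc; case: (eqVneq ks k) => [<-|nk]; first by have := Ha ks; lra.
  by have := H2 _ _ nk; lra.
have habs : 2 * b * `|t k - c| <= - a k.
  case: (lerP 0 (t k - c)) => h; first by rewrite ger0_norm.
  by rewrite ltr0_norm // mulrN -mulrN opprB.
have hr : 0 <= r k.
  have := Hs k; have := normr_ge0 (s k) => h0 h.
  have : 0 <= 2 * b * r k by apply: le_trans h.
  by rewrite pmulr_rge0.
have : `|s k * (t k - c)| <= - (r k * a k).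
  rewrite normrM -(ler_pM2l b2) mulrA (mulrC _ `|s k|) -mulrA.
  apply: le_trans (ler_wpM2l (normr_ge0 _) habs) _.
  rewrite mulrN -mulrN; have := Hs k => h; nra.
have := ler_norm (- (s k * (t k - c))); rewrite normrN; lra.
Qed.



Lemma sin_abs_bound (g th : R) : 0 < g < pi/2 -> `|th| <= g ->
  `|sin th| <= tan g * cos th.
Proof.
move=> /andP[g0 gpi] hth.
have cg : 0 < cos g by apply: cos_gt0_pihalf; rewrite gpi andbT; have := pi_gt0 R; lra.
have hx : sin `|th| = `|sin th|.
  case: (lerP 0 th) => h.
    rewrite ger0_norm // ger0_norm //; apply: sin_ge0_pi; have := pi_gt0 R => ?.
    rewrite ger0_norm // in hth; lra.
  rewrite ltr0_norm // sinN ler0_norm //; rewrite -[th]opprK sinN oppr_le0.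
  apply: sin_ge0_pi; rewrite ltr0_norm // in hth; have := pi_gt0 R; lra.
rewrite -hx -cos_norm.
have hs : 0 <= sin (g - `|th|).
  apply: sin_ge0_pi; have := pi_gt0 R; move=> ?; have := normr_ge0 th; move=> ?; apply/andP; split; lra.
rewrite sinB in hs.
rewrite /tan -(ler_pM2r cg) mulrAC divfK ?gt_eqF //.
lra.
Qed.

Lemma entry_bound (g : R) (z : R[i]) : 0 < g < pi/2 -> (z = 0 \/ parg_abs_le z g) ->
  `|cIm z| <= tan g * cRe z.
Proof.
move=> hg [->|[th [_ _ hth E]]]; first by rewrite /= normr0 mulr0.
have hM := modc_ge0 z; move: (modc z) hM E => M hM ->; rewrite /=.
rewrite normrM ger0_norm // mulrCA ler_wpM2l //; exact: sin_abs_bound.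
Qed.

Lemma ReMul (x y : R[i]) : cRe (x * y) = cRe x * cRe y - cIm x * cIm y.
Proof. by case: x y => a b [c d]. Qed.
Lemma ImMul (x y : R[i]) : cIm (x * y) = cRe x * cIm y + cIm x * cRe y.
Proof. by case: x y => a b [c d]. Qed.

Lemma parg1 (g : R) : 0 < g -> parg_abs_le (1 : R[i]) g.
Proof.
move=> g0; exists 0; split; [by rewrite oppr_lt0 pi_gt0|exact: pi_ge0|by rewrite normr0 ltW|].
have -> : modc (1 : R[i]) = 1 by rewrite /modc /= expr1n expr0n /= addr0 sqrtr1.
by rewrite cos0 sin0 mulr1 mulr0.
Qed.

Lemma strat_e p (g : R) (k : 'I_p) : 0 < g < pi/2 -> strat g (ebasis k).
Proof.
move=> /andP[g0 _]; split.
  by move=> j; rewrite ebasisE; case: eqP => _; [right; exact: parg1|left].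
under eq_bigr do rewrite ebasisE.
by rewrite (@sum_if1 _ (fun _ x => x)).
Qed.

Lemma cpm (g : R) : cp g + cm g = 1.
Proof. apply/eqP; rewrite eq_complex /= subrr eqxx andbT. apply/eqP. lra. Qed.

Lemma strat_mix p (g : R) (k l : 'I_p) : 0 < g < pi/2 -> k != l -> strat g (mix g k l).
Proof.
move=> hg kl; have [h1 h2] := @parg_cp g hg; split.
  by move=> j; rewrite mixE //; case: eqP => _; [right|case: eqP => _; [right|left]].
under eq_bigr do rewrite mixE //.
by rewrite (@sum_if2 _ (fun _ x => x)) // cpm.
Qed.

Lemma extreme_strat p (g : R) (d : 'cV[R[i]]_p) : 0 < g < pi/2 -> extreme_pt g d -> strat g d.
Proof.
move=> hg [[k ->]|[k [l [kl ->]]]]; first exact: strat_e.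
exact: (@strat_mix _ g k l hg kl).
Qed.

Lemma strat_facts p (g : R) (w : 'cV[R[i]]_p) : 0 < g < pi/2 -> strat g w ->
  [/\ \sum_k cRe (w k 0) = 1, \sum_k cIm (w k 0) = 0 &
      forall k, `|cIm (w k 0)| <= tan g * cRe (w k 0)].
Proof.
move=> hg [H1 H2]; split.
- by rewrite -raddf_sum H2.
- by rewrite -raddf_sum H2.
- move=> k; exact: entry_bound.
Qed.

Lemma ext_to_strat p (g : R) (f : 'I_p -> R[i]) (v : R) : 0 < g < pi/2 ->
  (forall d, extreme_pt g d -> cRe (\sum_k f k * d k 0) <= v) ->
  forall w, strat g w -> cRe (\sum_k f k * w k 0) <= v.
Proof.
move=> hg Hd w Hw.
have [S1 S0 Sb] := @strat_facts p g w hg Hw.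
have tg := @tan_gt0 g hg.
have He : forall k, cRe (f k) <= v.
  move=> k; have := Hd _ (or_introl (ex_intro _ k erefl)).
  under eq_bigr do rewrite ebasisE.
  by rewrite (@sum_if1 _ (fun j x => f j * x)) ?mulr1 // => j; rewrite mulr0.
have Hm : forall k l, k != l ->
    cRe (f k) / 2 - cIm (f k) * (tan g / 2) + (cRe (f l) / 2 + cIm (f l) * (tan g / 2)) <= v.
  move=> k l kl.
  have := Hd (mix g k l) (or_intror (ex_intro _ k (ex_intro _ l (conj kl erefl)))).
  under eq_bigr do rewrite mixE //.
  rewrite (@sum_if2 _ (fun j x => f j * x)) // => [|j]; last by rewrite mulr0.
  rewrite raddfD /= !ReMul /= => h; apply: le_trans h; apply: lerD; rewrite ?mulrN ?opprK ?mul1r; lra.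
have := @keyG p (tan g / 2) (fun k => cRe (f k) - v) (fun k => cIm (f k))
   (fun k => cRe (w k 0)) (fun k => cIm (w k 0)).
have -> : \sum_k (cRe (w k 0) * (cRe (f k) - v) - cIm (w k 0) * cIm (f k)) =
   cRe (\sum_k f k * w k 0) - v.
  rewrite raddf_sum.
  rewrite (eq_bigr (fun k => cRe (f k * w k 0) + - (v * cRe (w k 0)))); last first.
    by move=> k _; rewrite ReMul; ring.
  by rewrite big_split /= sumrN -mulr_sumr S1 mulr1.
move=> H; rewrite -subr_le0; apply: H => //.
- by apply: divr_gt0.
- by move=> k; rewrite subr_le0.
- move=> k l kl; have := Hm l k; rewrite eq_sym kl => /(_ isT); lra.
- by move=> k; rewrite (_ : 2 * (tan g / 2) = tan g); [exact: Sb|field].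
Qed.

Lemma bil_e m n (A : 'M[R[i]]_(m,n)) i d : bil A (ebasis i) d = (A *m d) i 0.
Proof.
rewrite bilE; under eq_bigr do rewrite ebasisE.
rewrite (@sum_if1 _ (fun j x => x^* * (A *m d) j 0)); last by move=> j; rewrite conjC0 mul0r.
by rewrite conjC1 mul1r.
Qed.

Lemma payoff_mix m n (A : 'M[R[i]]_(m,n)) (g : R) k l w : k != l ->
  payoff A (mix g k l) w =
   (cRe ((A *m w) k 0) / 2 + tan g / 2 * cIm ((A *m w) k 0)) +
   (cRe ((A *m w) l 0) / 2 - tan g / 2 * cIm ((A *m w) l 0)).
Proof.
move=> kl; rewrite /payoff bilE; under eq_bigr do rewrite mixE //.
rewrite (@sum_if2 _ (fun j x => x^* * (A *m w) j 0)) //; last by move=> j; rewrite conjC0 mul0r.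
rewrite raddfD /=; congr (_ + _); rewrite /cp /cm; case: ((A *m w) _ 0) => a b /=.
  ring.
ring.
Qed.

Lemma ins0_lift m (i0 : 'I_m.+1) (z : 'cV[R[i]]_m) k : ins0 i0 z (lift i0 k) 0 = z k 0.
Proof. by rewrite /ins0 mxE liftK. Qed.
Lemma ins0_i0 m (i0 : 'I_m.+1) (z : 'cV[R[i]]_m) : ins0 i0 z i0 0 = 0.
Proof. by rewrite /ins0 mxE unlift_none. Qed.

Lemma ins0_strat m (i0 : 'I_m.+1) (g : R) z : strat g z -> strat g (ins0 i0 z).
Proof.
move=> [H1 H2]; split.
  move=> i; rewrite /ins0 mxE; case: (unlift i0 i) => [k|]; [exact: H1|by left].
rewrite (bigD1_ord i0) //= ins0_i0 add0r -H2; apply: eq_bigr => k _; exact: ins0_lift.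
Qed.

Lemma payoff_ins0 m n (i0 : 'I_m.+1) (A : 'M[R[i]]_(m.+1,n)) z w :
  payoff (row' i0 A) z w = payoff A (ins0 i0 z) w.
Proof.
rewrite !payoff_alt (bigD1_ord i0) //= ins0_i0 mulr0 add0r; congr (cRe _).
apply: eq_bigr => k _; rewrite ins0_lift; congr (_^* * _).
by rewrite !mxE; apply: eq_bigr => j _; rewrite !mxE.
Qed.

Lemma row'_ins0 m (i0 : 'I_m.+1) (z : 'cV[R[i]]_m.+1) : z i0 0 = 0 -> z = ins0 i0 (row' i0 z).
Proof.
move=> z0; apply/matrixP => i j; rewrite (ord1 j) /ins0 !mxE.
case: unliftP => [k ->|->] //; by rewrite mxE.
Qed.

Lemma row'_strat m (i0 : 'I_m.+1) (g : R) (z : 'cV[R[i]]_m.+1) : z i0 0 = 0 -> strat g z -> strat g (row' i0 z).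
Proof.
move=> z0 [H1 H2]; split; first by move=> k; rewrite mxE; exact: H1.
rewrite -H2 (bigD1_ord i0) //= z0 add0r; apply: eq_bigr => k _; by rewrite mxE.
Qed.

End S.

Theorem theorem6p9 (R : realType) (m' n : nat) (A : 'M[R[i]]_(m'.+1, n))
    (alpha0 beta0 : R) (i0 i1 : 'I_m'.+1)
    (z0 : 'cV[R[i]]_m') (w0 : 'cV[R[i]]_n) :
  (1 < m'.+1)%N ->
  0 < alpha0 < pi / 2 ->
  0 < beta0 < pi / 2 ->
  i1 != i0 ->
  (forall d, extreme_pt beta0 d -> payoff A (ebasis i0) d <= payoff A (ebasis i1) d) ->
  (exists2 d0, extreme_pt beta0 d0 & payoff A (ebasis i0) d0 < payoff A (ebasis i1) d0) ->
  complex_NE alpha0 beta0 (row' i0 A) z0 w0 ->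
  complex.Im (bil A (ebasis i0) w0) = complex.Im (bil A (ebasis i1) w0) ->
  complex_NE alpha0 beta0 A (ins0 i0 z0) w0 /\
  payoff (row' i0 A) z0 w0 = payoff A (ins0 i0 z0) w0.
Proof.
move=> _ ha hb i10 Hdom _ [Sz0 Sw0 Hz Hw] HIm.
split; last exact: payoff_ins0.
set v := payoff A (ins0 i0 z0) w0.
set u := A *m w0.
have PD : cRe (u i0 0) <= cRe (u i1 0).
  rewrite -subr_le0.
  have E : forall d : 'cV[R[i]]_n, cRe (\sum_k (A i0 k - A i1 k) * d k 0) =
      payoff A (ebasis i0) d - payoff A (ebasis i1) d.
    move=> d; rewrite !payoff_e -raddfB /= -sumrB; congr (cRe _).
    by apply: eq_bigr => k _; rewrite mulrBl.
  have := @ext_to_strat R n beta0 (fun k => A i0 k - A i1 k) 0 hb.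
  move=> /(_ _ w0 Sw0); rewrite E !payoff_e !mxE; apply => d Hd.
  by rewrite E subr_le0; apply: Hdom.
have QI : cIm (u i0 0) = cIm (u i1 0) by rewrite -!bil_e.
have Fz : forall d : 'cV[R[i]]_m'.+1, d i0 0 = 0 -> strat alpha0 d -> payoff A d w0 <= v.
  move=> d d0 Sd; rewrite (@row'_ins0 R _ i0 d d0) -payoff_ins0 /v -payoff_ins0.
  apply: Hz; exact: row'_strat.
have Fe : forall j, j != i0 -> cRe (u j 0) <= v.
  move=> j ji; rewrite -bil_e; apply: Fz; last exact: strat_e.
  by rewrite ebasisE eq_sym (negbTE ji).
have Fm : forall k l, k != l -> k != i0 -> l != i0 ->
    (cRe (u k 0) / 2 + tan alpha0 / 2 * cIm (u k 0)) +
    (cRe (u l 0) / 2 - tan alpha0 / 2 * cIm (u l 0)) <= v.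
  move=> k l kl ki li; rewrite -(@payoff_mix _ _ _ A alpha0 k l w0 kl).
  apply: Fz; last exact: strat_mix.
  by rewrite mixE // eq_sym (negbTE ki) eq_sym (negbTE li).
have Fi1 := Fe i1 i10.
split => //; first exact: ins0_strat.
- move=> z Sz; rewrite payoff_alt.
  apply: (@ext_to_strat R m'.+1 alpha0 (fun i => (u i 0)^*) v ha) => // d Hd.
  rewrite -payoff_alt.
  case: Hd => [[j ->]|[k [l [kl ->]]]].
    rewrite /payoff bil_e -/u.
    case: (eqVneq j i0) => [->|ji]; [exact: le_trans PD Fi1|exact: Fe].
  rewrite payoff_mix // -/u.
  case: (eqVneq k i0) => [ek|ki].
    subst k; case: (eqVneq l i1) => [el|li1].
      subst l; rewrite QI; lra.
    have li1' : i1 != l by rewrite eq_sym.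
    have li0 : l != i0 by rewrite eq_sym.
    have h := Fm i1 l li1' i10 li0.
    rewrite QI; lra.
  case: (eqVneq l i0) => [el|li].
    subst l; case: (eqVneq k i1) => [ek|ki1].
      subst k; rewrite QI; lra.
    have := Fm k i1 ki1 ki i10; rewrite QI; lra.
  exact: Fm.
- by move=> w Sw; rewrite /v -!payoff_ins0; apply: Hw.
Qed.
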